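(* Let $F=F(N,\mathcal D)$ be a connected GSC and let $x$ be a local cut point of $F$. For $n\ge1$ let $E'_n(x)=\bigcup_{\mathbf i\in\Omega_n(x)}\varphi_{\mathbf i}(F)$. Then there exists $m\ge1$ such that $x$ is a cut point of $E'_m(x)$.
   Context: GSC: $N\ge2$, $\mathcal D\subset\{0,\dots,N-1\}^2$ with $1<|\mathcal D|<N^2$, $\varphi_i(x)=\frac1N(x+i)$, $F$ the attractor $F=\bigcup_{i\in\mathcal D}\varphi_i(F)$; $\varphi_{i_1\cdots i_k}=\varphi_{i_1}\circ\cdots\circ\varphi_{i_k}$. $\Omega_n(x)=\{\mathbf i\in\mathcal D^n: x\in\varphi_{\mathbf i}(F)\}$. A local cut point of $F$ is a point that is a cut point (removal disconnects) of some connected neighborhood of itself in $F$. *)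

(* Defs.v *)
From HB Require Import structures.
From mathcomp Require Import all_boot all_order all_algebra.
From mathcomp Require Import all_classical all_reals all_analysis.
Set Implicit Arguments. Unset Strict Implicit. Unset Printing Implicit Defensive.
Import Order.TTheory GRing.Theory Num.Theory.
Import numFieldNormedType.Exports.
Local Open Scope classical_set_scope.
Local Open Scope ring_scope.

Section GSC.
Variables (R : realType) (N : nat).

Definition gsc_map (i : 'I_N * 'I_N) (p : R * R) : R * R :=
  ((p.1 + (i.1 : nat)%:R) / N%:R, (p.2 + (i.2 : nat)%:R) / N%:R).

Definition gsc_word_map (w : seq ('I_N * 'I_N)) (p : R * R) : R * R :=
  foldr gsc_map p w.

Definition is_gsc_attractor (D : {set 'I_N * 'I_N}) (F : set (R * R)) : Prop :=
  [/\ compact F, F !=set0 &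
      F = \bigcup_(i in [set i | i \in D]) (gsc_map i @` F)].

Definition Omega (D : {set 'I_N * 'I_N}) (F : set (R * R)) (n : nat) (x : R * R)
  : set (seq ('I_N * 'I_N)) :=
  [set w | [/\ size w = n, all (fun i => i \in D) w & (gsc_word_map w @` F) x]].

Definition E' (D : {set 'I_N * 'I_N}) (F : set (R * R)) (n : nat) (x : R * R)
  : set (R * R) :=
  \bigcup_(w in Omega D F n x) (gsc_word_map w @` F).

End GSC.

Definition cut_point {T : topologicalType} (A : set T) (x : T) : Prop :=
  A x /\ ~ connected (A `\ x).

Definition local_cut_point {T : topologicalType} (F : set T) (x : T) : Prop :=
  exists U : set T,
    [/\ U `<=` F, connected U,
        (exists2 O : set T, open O /\ O x & O `&` F `<=` U)
      & cut_point U x].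

(* Main.v *)
Require Import Defs.
From HB Require Import structures.
From mathcomp Require Import all_boot all_order all_algebra.
From mathcomp Require Import all_classical all_reals all_analysis.
From mathcomp Require Import lra.
Import Order.TTheory GRing.Theory Num.Theory.
Import numFieldNormedType.Exports.
Local Open Scope classical_set_scope.
Local Open Scope ring_scope.
Section H.
Variables (R : realType) (N : nat).
Hypothesis hN : (0 < N)%N.

Lemma gsc_map_dist i (p q : R * R) :
  `|@gsc_map R N i p - @gsc_map R N i q| = `|p - q| / N%:R.
Proof.
have e : forall a b c : R, (a + c) / N%:R - (b + c) / N%:R = (a - b) / N%:R.
  by move=> a b c; rewrite -mulrBl opprD addrACA subrr addr0.
rewrite !prod_normE /= e e !normrM normfV normr_nat maxr_pMl //.
Qed.

Lemma gsc_word_dist w (p q : R * R) :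
  `|@gsc_word_map R N w p - @gsc_word_map R N w q| = `|p - q| / (N%:R ^+ size w).
Proof.
elim: w => [|i w IH] /=; first by rewrite expr0 divr1.
rewrite gsc_map_dist IH exprS invfM -mulrA; congr (_ * _); by rewrite mulrC.
Qed.

Lemma gsc_word_cont w : continuous (@gsc_word_map R N w).
Proof.
move=> p; apply/cvgrPdist_lt => e e0.
have Npos : 0 < (N%:R : R) ^+ size w by rewrite exprn_gt0 // ltr0n.
have /cvgrPdist_lt /(_ (e * N%:R ^+ size w) (mulr_gt0 e0 Npos)) := @cvg_id _ (nbhs p).
apply: filterS => y hy.
by rewrite gsc_word_dist ltr_pdivrMr.
Qed.

End H.

Section H2.
Variables (R : realType) (N : nat) (D : {set 'I_N * 'I_N}) (F : set (R * R)).
Hypothesis hA : is_gsc_attractor D F.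
Hypothesis hN : (0 < N)%N.

Lemma cell_sub w : all (fun i => i \in D) w -> forall q, F q -> F (@gsc_word_map R N w q).
Proof.
case: hA => _ _ eF.
elim: w => [|i w IH] //= /andP[iD aw] q Fq.
rewrite eF; exists i => //; exists (gsc_word_map w q) => //; exact: IH.
Qed.

Lemma cell_cover m y : F y -> exists w, [/\ size w = m, all (fun i => i \in D) w &
   (@gsc_word_map R N w @` F) y].
Proof.
case: hA => _ _ eF Fy.
elim: m => [|m [w [sw aw [q Fq qy]]]]; first by exists [::]; split => //; exists y.
move: Fq; rewrite {1}eF => -[i /= iD [q' Fq' qq']].
exists (rcons w i); split.
- by rewrite size_rcons sw.
- by rewrite all_rcons iD.
- exists q' => //; by rewrite /gsc_word_map foldr_rcons qq'.
Qed.

Lemma F_bounded : exists M : R, forall p, F p -> `|p| <= M.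
Proof.
case: hA => cF _ _.
have := compact_bounded cF.
case=> M0 [_ HM]; exists (M0 + 1) => p Fp.
by apply: (HM (M0 + 1)) => //; rewrite ltrDl.
Qed.

Lemma cell_closed w : closed (@gsc_word_map R N w @` F).
Proof.
case: hA => cF _ _.
apply: compact_closed; first exact: norm_hausdorff.
apply: continuous_compact => //; apply: continuous_subspaceT.
exact: gsc_word_cont hN _.
Qed.

End H2.

Lemma sep_closure (T : topologicalType) (U A B : set T) x :
  hausdorff_space T -> connected U -> U x -> U `\ x = A `|` B ->
  separated A B -> B !=set0 -> closure B x.
Proof.
move=> hT cU Ux eU [s1 s2] Bn; apply: contrapT => ncl.
have Bx : forall y, B y -> y <> x.
  move=> y By; have [_ h] : (U `\ x) y by rewrite eU; right.
  exact: h.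
have cx : closure [set x] `<=` [set x].
  exact: (@accessible_closed_set1 T (hausdorff_accessible hT) x).
have : ~ connected U; last by [].
apply/connectedPn; exists (fun b => if b then B else A `|` [set x]); split.
- by case => //; exists x; right.
- apply/seteqP; split => y.
  + move=> Uy; have [->|yx] := pselect (y = x); first by left; right.
    have : (U `\ x) y by split.
    by rewrite eU => -[Ay|By]; [left; left|right].
  + case=> [[Ay|->//]|By].
    * by have [] : (U `\ x) y by rewrite eU; left.
    * by have [] : (U `\ x) y by rewrite eU; right.
- split; rewrite -subset0 => y [].
  + rewrite closureU => -[cA|/cx ->] By.
    * have : (closure A `&` B) y by [].
      by rewrite s1.
    * exact: Bx By erefl.
  + case=> [Ay|->] cB.
    * have : (A `&` closure B) y by [].
      by rewrite s2.
    * exact: ncl.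
Qed.

Theorem mainTheorem19 (R : realType) (N : nat) (D : {set 'I_N * 'I_N})
  (F : set (R * R)) (x : R * R) :
  (2 <= N)%N -> (1 < #|D|)%N -> (#|D| < N ^ 2)%N ->
  is_gsc_attractor D F -> connected F -> local_cut_point F x ->
  exists2 m : nat, (1 <= m)%N & cut_point (E' D F m x) x.
Proof.
move=> hN2 _ _ hA _ [U [UF cU hO [Ux ncU]]].
case: hO => O [oO Ox] OU.
have hN : (0 < N)%N by apply: leq_trans hN2.
have hT : hausdorff_space (R * R)%type := @norm_hausdorff R (R * R)%type.
move/connectedPn: ncU => [E [En Eu Es]].
have clE : forall b, closure (E b) x.
  case.
  - exact: (@sep_closure _ _ _ _ _ hT cU Ux Eu Es (En true)).
  - apply: (@sep_closure _ _ _ _ _ hT cU Ux _ _ (En false)).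
    + by rewrite Eu setUC.
    + by rewrite separatedC.
have nO : nbhs x O by apply: open_nbhs_nbhs; split.
case/nbhs_ballP: nO => r r0 hr.
have [M HM] := F_bounded _ _ _ _ hA.
have M0 : 0 <= M + M by have := HM x (UF x Ux); have := normr_ge0 x; lra.
set k := Num.Def.archi_bound ((M + M) / r).
have hk : (M + M) / r < k%:R by apply: archi_boundP; rewrite divr_ge0 // ltW.
set m := k.+1.
have Nm : (m%:R : R) <= N%:R ^+ m.
  rewrite -natrX ler_nat; apply: ltnW; exact: ltn_expl.
have Hdist : forall w p q, size w = m -> F p -> F q ->
    `|@gsc_word_map R N w p - @gsc_word_map R N w q| < r.
  move=> w p q sw Fp Fq; rewrite gsc_word_dist // sw.
  have Npos : 0 < (N%:R : R) ^+ m by rewrite exprn_gt0 // ltr0n.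
  rewrite ltr_pdivrMr //.
  apply: (le_lt_trans (ler_normB p q)).
  apply: (le_lt_trans (lerD (HM p Fp) (HM q Fq))).
  rewrite ltr_pdivrMr // in hk.
  apply: (lt_le_trans hk); rewrite mulrC ler_pM2l //.
  apply: le_trans Nm; rewrite ler_nat; exact: leqnSn.
have E'U : E' D F m x `<=` U.
  move=> y [w [sw aw [p Fp px]] [q Fq qy]].
  apply: OU; split.
  - apply: hr; rewrite -ball_normE /ball_ /= -px -qy; exact: Hdist.
  - rewrite -qy; exact: (cell_sub _ _ _ _ hA).
have hV : \forall y \near x, forall t : m.-tuple ('I_N * 'I_N),
    (@gsc_word_map R N t @` F) y -> (@gsc_word_map R N t @` F) x.
  apply: (@filter_forall _ _ _ (nbhs x) _) => t.
  have [h|h] := pselect ((@gsc_word_map R N t @` F) x).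
    by apply: nearW => y _.
  have : nbhs x (~` (@gsc_word_map R N t @` F)).
    apply: open_nbhs_nbhs; split => //; apply: closed_openC.
    exact: (cell_closed _ _ _ _ hA hN).
  by apply: filterS => y ny cy.
exists m => //; split.
- have [w [sw aw cx]] := cell_cover _ _ _ _ hA m x (UF x Ux).
  by exists w.
- apply/connectedPn; exists (fun b => E b `&` E' D F m x); split.
  + move=> b; have [y [Eby Vy]] := clE b _ hV.
    have [Uy ny] : (U `\ x) y by rewrite Eu; case: b Eby => ?; [right|left].
    have [w [sw aw cy]] := cell_cover _ _ _ _ hA m y (UF y Uy).
    exists y; split => //; exists w => //; split => //.
    have sw' : size w == m by apply/eqP.
    exact: (Vy (Tuple sw') cy).
  + apply/seteqP; split => y.
    * move=> [E'y ny]; have : (U `\ x) y by split => //; exact: E'U.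
      by rewrite Eu => -[?|?]; [left|right].
    * move=> [[Ey E'y]|[Ey E'y]]; split => //.
      - by have [] : (U `\ x) y by rewrite Eu; left.
      - by have [] : (U `\ x) y by rewrite Eu; right.
  + case: Es => s1 s2; split; rewrite -subset0 => y [].
    * move=> /(closureS (@subIsetl _ (E false) (E' D F m x))) ca [eb _].
      have : (closure (E false) `&` E true) y by [].
      by rewrite s1.
    * move=> [ea _] /(closureS (@subIsetl _ (E true) (E' D F m x))) cb.
      have : (E false `&` closure (E true)) y by [].
      by rewrite s2.
Qed.
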